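(* Let $G$ be a strongly connected directed co-graph with co-tree $T$, let $\hat{w}$ be an inner node of $T$, and let $R_{\hat{w}}\subseteq V(G_{\hat{w}})$ be a resolving set for $V(G_{\hat{w}})$ in $G$ such that $G_{\hat{w}}$ has a 1-vertex $u_1$ and a 2-vertex $u_2$ w.r.t. $R_{\hat{w}}$. Then there is no vertex $v\in V(G_{\hat{w}})\setminus\{u_1,u_2\}$ such that $R_{\hat{w}}\cup\{v\}$ is a resolving set for $V(G_{\hat{w}})$ in $G$ and $G_{\hat{w}}$ has neither a 1-vertex nor a 2-vertex w.r.t. $R_{\hat{w}}\cup\{v\}$.
   Context: All graphs are finite and simple. For vertices $u,v$ of a directed graph $G$, $d_G(u,v)$ is the length of a shortest directed path from $u$ to $v$ (undefined if none exists); $G$ is strongly connected if directed paths exist in both directions between any two vertices. A vertex $w$ resolves two distinct vertices $u,v$ in $G$ if $w=u$, or $w=v$, or there are paths from $w$ to $u$ and from $w$ to $v$ with $d_G(w,u)\neq d_G(w,v)$. For $U\subseteq V(G)$, a set $R\subseteq U$ is a resolving set for $U$ in $G$ if every pair of distinct vertices of $U$ is resolved in $G$ by some vertex of $R$. Directed co-graphs and co-trees: a single vertex $u$ is a directed co-graph whose co-tree is a single leaf associated with $u$. If $G_1,G_2$ are directed co-graphs on disjoint vertex sets with co-trees $T_1,T_2$, then the disjoint union (edge set $E(G_1)\cup E(G_2)$), the join (additionally all edges $(u,v),(v,u)$ with $u\in V(G_1),v\in V(G_2)$) and the directed join (additionally all edges $(u,v)$ with $u\in V(G_1),v\in V(G_2)$),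 each on vertex set $V(G_1)\cup V(G_2)$, are directed co-graphs; the co-tree is obtained by adding a new root (labelled by the operation) whose two successors are the roots of $T_1$ and $T_2$. Non-leaf nodes are inner nodes. For a node $\hat{w}$ of $T$, $G_{\hat{w}}$ is the subgraph of $G$ induced by the vertices associated with the leaves of the subtree rooted at $\hat{w}$. For a directed graph $H$ and a nonempty $R\subseteq V(H)$, a vertex $u\in V(H)\setminus R$ is a 1-vertex w.r.t. $R$ if $(w,u)\in E(H)$ for all $w\in R$, and a 2-vertex w.r.t. $R$ if $(w,u)\notin E(H)$ for all $w\in R$. *)

(* Defs.v *)
From mathcomp Require Import all_boot.
Set Implicit Arguments. Unset Strict Implicit. Unset Printing Implicit Defensive.

Inductive cotree (V : Type) : Type :=
| CLeaf of V
| CUnion of cotree V & cotree V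
| CJoin of cotree V & cotree V
| CDJoin of cotree V & cotree V.       (* directed join: all edges left -> right *)

Section Cotree.
Variable V : eqType.

Fixpoint leaves (t : cotree V) : seq V :=
  match t with
  | CLeaf v => [:: v]
  | CUnion a b | CJoin a b | CDJoin a b => leaves a ++ leaves b
  end.

(* well-formedness: the two operands have disjoint vertex sets (recursively) *)
Definition cotree_wf (t : cotree V) : bool := uniq (leaves t).

Fixpoint cog_edge (t : cotree V) (x y : V) : bool :=
  match t with
  | CLeaf _ => false
  | CUnion a b => cog_edge a x y || cog_edge b x y
  | CJoin a b => [|| cog_edge a x y, cog_edge b x y,
                     (x \in leaves a) && (y \in leaves b) |
                     (y \in leaves a) && (x \in leaves b)]
  | CDJoin a b => [|| cog_edge a x y, cog_edge b x y |
                      (x \in leaves a) && (y \in leaves b)]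
  end.

Fixpoint subtree (s t : cotree V) : Prop :=
  s = t \/
  match t with
  | CLeaf _ => False
  | CUnion a b | CJoin a b | CDJoin a b => subtree s a \/ subtree s b
  end.

Definition inner (t : cotree V) : Prop :=
  match t with CLeaf _ => False | _ => True end.
End Cotree.

Section Dist.
Variable V : finType.
Variable e : rel V.

Definition walk_len (x y : V) (k : nat) : Prop :=
  exists p : seq V, [/\ size p = k, path e x p & last x p = y].

Definition is_dist (x y : V) (d : nat) : Prop :=
  walk_len x y d /\ forall k, k < d -> ~ walk_len x y k.

Definition strongly_connected : Prop := forall x y : V, connect e x y.

Definition resolves (w u v : V) : Prop :=
  w = u \/ w = v \/
  exists du dv, [/\ is_dist w u du, is_dist w v dv & du <> dv].

Definition resolving_for (R U : {set V}) : Prop :=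
  R \subset U /\
  forall u v, u \in U -> v \in U -> u <> v -> exists2 w, w \in R & resolves w u v.

Definition one_vertex (U R : {set V}) (u : V) : Prop :=
  [/\ R != set0, u \in U, u \notin R & forall w, w \in R -> e w u].
Definition two_vertex (U R : {set V}) (u : V) : Prop :=
  [/\ R != set0, u \in U, u \notin R & forall w, w \in R -> ~~ e w u].
End Dist.

Definition vset (V : finType) (t : cotree V) : {set V} := [set x | x \in leaves t].

(* Main.v *)
Require Import Defs.
From mathcomp Require Import all_boot.
Set Implicit Arguments. Unset Strict Implicit. Unset Printing Implicit Defensive.

Section S.
Variable V : finType.

Lemma edge_leaves (t : cotree V) x y :
  cog_edge t x y -> (x \in leaves t) && (y \in leaves t).
Proof.
elim: t => [z|a IHa b IHb|a IHa b IHb|a IHa b IHb] //=; rewrite !mem_cat.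
- by case/orP => [/IHa|/IHb] /andP[hx hy]; rewrite hx hy ?orbT.
- by case/or4P => [/IHa|/IHb|/andP[hx hy]|/andP[hx hy]] => [/andP[hx hy]|/andP[hx hy]||];
     rewrite hx hy ?orbT.
- by case/or3P => [/IHa|/IHb|/andP[hx hy]] => [/andP[hx hy]|/andP[hx hy]|];
     rewrite hx hy ?orbT.
Qed.

Definition noconf (t : cotree V) := forall u1 u2 v r1 r2 : V,
  u1 \in leaves t -> u2 \in leaves t -> v \in leaves t -> r1 \in leaves t ->
  r2 \in leaves t ->
  cog_edge t r1 u1 -> ~~ cog_edge t r1 u2 -> ~~ cog_edge t v u1 ->
  cog_edge t v u2 -> cog_edge t r2 u1 -> ~~ cog_edge t r2 u2 ->
  ~~ cog_edge t r1 v -> cog_edge t r2 v -> False.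

Lemma split_gen (a b : cotree V) (E : rel V) (cab cba : bool) :
  uniq (leaves a ++ leaves b) ->
  (forall x y, E x y = [|| cog_edge a x y, cog_edge b x y,
       [&& cab, x \in leaves a & y \in leaves b] |
       [&& cba, y \in leaves a & x \in leaves b]]) ->
  noconf a -> noconf b ->
  forall u1 u2 v r1 r2 : V,
  u1 \in leaves a ++ leaves b -> u2 \in leaves a ++ leaves b ->
  v \in leaves a ++ leaves b -> r1 \in leaves a ++ leaves b ->
  r2 \in leaves a ++ leaves b ->
  E r1 u1 -> ~~ E r1 u2 -> ~~ E v u1 ->
  E v u2 -> E r2 u1 -> ~~ E r2 u2 ->
  ~~ E r1 v -> E r2 v -> False.
Proof.
move=> uq HE IHa IHb.
have HE' : forall x y, E x y = [|| [&& cog_edge a x y, x \in leaves a & y \in leaves a],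
     [&& cog_edge b x y, x \in leaves b & y \in leaves b],
       [&& cab, x \in leaves a & y \in leaves b] |
       [&& cba, y \in leaves a & x \in leaves b]].
  move=> x y; rewrite HE.
  case ea: (cog_edge a x y); first by move/edge_leaves: ea => /andP[-> ->].
  case eb: (cog_edge b x y); first by move/edge_leaves: eb => /andP[-> ->]; rewrite orbT.
  by [].
move: uq; rewrite cat_uniq => /and3P[_ /hasPn dis _].
have mem2 : forall x, x \in leaves a ++ leaves b ->
   ((x \in leaves a) = true /\ (x \in leaves b) = false) \/
   ((x \in leaves a) = false /\ (x \in leaves b) = true).
  move=> x; rewrite mem_cat; case xa: (x \in leaves a); case xb: (x \in leaves b) => //= _.
  - by move: (dis x xb); rewrite xa.
  - by left.
  - by right.
move=> u1 u2 v r1 r2 h1 h2 h3 h4 h5; rewrite !HE'; clear HE HE'.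
case: (mem2 _ h1) => -[a1 b1]; rewrite ?a1 ?b1;
case: (mem2 _ h2) => -[a2 b2]; rewrite ?a2 ?b2;
case: (mem2 _ h3) => -[a3 b3]; rewrite ?a3 ?b3;
case: (mem2 _ h4) => -[a4 b4]; rewrite ?a4 ?b4;
case: (mem2 _ h5) => -[a5 b5]; rewrite ?a5 ?b5;
case: cab; case: cba; rewrite /= ?andbT ?andbF ?orbF //;
try (by move=> *; apply: (IHa u1 u2 v r1 r2));
try (by move=> *; apply: (IHb u1 u2 v r1 r2));
try (by move=> *; discriminate).
Qed.

Lemma key (t : cotree V) : uniq (leaves t) -> noconf t.
Proof.
elim: t => [z|a IHa b IHb|a IHa b IHb|a IHa b IHb] /= uq.
- move=> u1 u2 v r1 r2 /=; by [].
- have := cat_uniq (leaves a) (leaves b); rewrite uq => /esym/and3P[ua _ ub].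
  move=> u1 u2 v r1 r2; apply: (split_gen (cab:=false) (cba:=false) uq) => //.
  + by move=> x y /=; rewrite !orbF.
  + exact: IHa. + exact: IHb.
- have := cat_uniq (leaves a) (leaves b); rewrite uq => /esym/and3P[ua _ ub].
  move=> u1 u2 v r1 r2; apply: (split_gen (cab:=true) (cba:=true) uq) => //.
  + exact: IHa. + exact: IHb.
- have := cat_uniq (leaves a) (leaves b); rewrite uq => /esym/and3P[ua _ ub].
  move=> u1 u2 v r1 r2; apply: (split_gen (cab:=true) (cba:=false) uq) => //.
  + by move=> x y /=; rewrite orbF.
  + exact: IHa. + exact: IHb.
Qed.


Lemma leaves_ne (t : cotree V) : exists z, z \in leaves t.
Proof.
elim: t => [z|a [z hz] b _|a [z hz] b _|a [z hz] b _] /=;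
  by [exists z; rewrite inE | exists z; rewrite mem_cat hz].
Qed.

Lemma path_closed (S : pred V) (e : rel V) :
  (forall x y, S x -> e x y -> S y) ->
  forall p x, S x -> path e x p -> S (last x p).
Proof.
move=> cl; elim=> [|z p IH] x //= Sx /andP[exz pz].
exact: (IH z (cl _ _ Sx exz) pz).
Qed.

Lemma dist_uniq (e : rel V) x y d1 d2 :
  is_dist e x y d1 -> is_dist e x y d2 -> d1 = d2.
Proof.
move=> [w1 m1] [w2 m2]; case: (ltngtP d1 d2) => // h.
- by case: (m2 _ h w1).
- by case: (m1 _ h w2).
Qed.

Lemma dist1 (e : rel V) x y : x <> y -> e x y -> is_dist e x y 1.
Proof.
move=> nxy exy; split; first by exists [:: y]; rewrite /= exy.
case=> // _ [p [sp _ lp]]; case: p sp lp => //= _ lp; exact: nxy.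
Qed.

Lemma dist2 (T : cotree V) : uniq (leaves T) -> (forall x, x \in leaves T) ->
  strongly_connected (cog_edge T) ->
  forall x y, x <> y -> ~~ cog_edge T x y -> is_dist (cog_edge T) x y 2.
Proof.
case: T => [z|a b|a b|a b] uq cov sc x y nxy nexy.
- have := cov x; have := cov y; rewrite /= !mem_seq1 => /eqP hy /eqP hx; by case: nxy; rewrite hx hy.
- exfalso; move: uq; rewrite /= cat_uniq => /and3P[_ /hasPn dis _].
  have [xa hxa] := leaves_ne a; have [yb hyb] := leaves_ne b.
  move/connectP: (sc xa yb) => [p pp lp].
  have : last xa p \in leaves a.
    apply: (path_closed (S := mem (leaves a))) pp => //.
    move=> x' y' /= hx /orP[/edge_leaves/andP[_ ->] //|/edge_leaves/andP[hx' _]].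
    by move: (dis _ hx'); rewrite hx.
  rewrite -lp => h; by move: (dis _ hyb); rewrite h.
-
  move: uq; rewrite /= cat_uniq => /and3P[_ /hasPn dis _].
  have [za hza] := leaves_ne a; have [zb hzb] := leaves_ne b.
  have side : ((x \in leaves a) && (y \in leaves a)) || ((x \in leaves b) && (y \in leaves b)).
    move: nexy (cov x) (cov y); rewrite /= !mem_cat.
    case: (x \in leaves a); case: (x \in leaves b); case: (y \in leaves a);
      case: (y \in leaves b); by rewrite /= ?orbT ?andbF ?orbF.
  have [z [exz ezy]] : exists z, cog_edge (CJoin a b) x z /\ cog_edge (CJoin a b) z y.
    case/orP: side => /andP[hx hy].
    + by exists zb; rewrite /= hx hy hzb !orbT.
    + by exists za; rewrite /= hx hy hza !orbT.
  split; first by exists [:: z; y]; split=> //; apply/andP; split=> //; apply/andP; split.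
  case=> [|[|//]] _ [p [sp pp lp]].
  + by case: p sp pp lp => //= _ _ lp; exact: nxy.
  + case: p sp pp lp => [|q [|//]] //= _; rewrite andbT => eq lq.
    by move: nexy; rewrite -lq /= eq.
- exfalso; move: uq; rewrite /= cat_uniq => /and3P[_ /hasPn dis _].
  have [xa hxa] := leaves_ne a; have [yb hyb] := leaves_ne b.
  move/connectP: (sc yb xa) => [p pp lp].
  have : last yb p \in leaves b.
    apply: (path_closed (S := mem (leaves b))) pp => //.
    move=> x' y' /= hx /or3P[/edge_leaves/andP[hx' _]|/edge_leaves/andP[_ ->] //|/andP[hx' _]];
    by move: (dis _ hx); rewrite hx'.
  rewrite -lp => h; by move: (dis _ h); rewrite hxa.
Qed.

End S.

Theorem lemma3 (V : finType) (T : cotree V)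
  (wfT : cotree_wf T) (covT : forall x : V, x \in leaves T)
  (scG : strongly_connected (cog_edge T))
  (w : cotree V) (w_node : subtree w T) (w_inner : inner w)
  (R : {set V}) (HR : resolving_for (cog_edge T) R (vset w))
  (u1 u2 : V)
  (Hu1 : one_vertex (cog_edge T) (vset w) R u1)
  (Hu2 : two_vertex (cog_edge T) (vset w) R u2) :
  ~ exists v : V,
      [/\ v \in vset w, v <> u1, v <> u2,
          resolving_for (cog_edge T) (v |: R) (vset w) &
          (forall x, ~ one_vertex (cog_edge T) (vset w) (v |: R) x /\
                     ~ two_vertex (cog_edge T) (vset w) (v |: R) x)].
Proof.
move=> [v [vw vu1 vu2 HR' Hno]].
case: Hu1 => Rn u1w u1R Hr1; case: Hu2 => _ u2w u2R Hr2.
have R'n : v |: R != set0 by apply/set0Pn; exists v; rewrite setU11.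
have nev1 : ~~ cog_edge T v u1.
  apply/negP => e1; case: (Hno u1) => H _; apply: H; split => //.
  - by rewrite in_setU1 negb_or u1R andbT; apply/eqP => h; apply: vu1.
  - by move=> x; rewrite in_setU1 => /orP[/eqP->|/Hr1].
have ev2 : cog_edge T v u2.
  apply/negPn/negP => e2; case: (Hno u2) => _ H; apply: H; split => //.
  - by rewrite in_setU1 negb_or u2R andbT; apply/eqP => h; apply: vu2.
  - by move=> x; rewrite in_setU1 => /orP[/eqP->|/Hr2].
have vR : v \notin R by apply/negP => hv; move: nev1; rewrite (Hr1 _ hv).
have neqR : forall r x, r \in R -> x \notin R -> r <> x.
  by move=> r x hr hx h; move: hx; rewrite -h hr.
case: HR => _ HRr.
have [r1 r1R res1] := HRr v u1 vw u1w vu1.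
have ne1 : ~~ cog_edge T r1 v.
  case: res1 => [h|[h|[du [dv [d1 d2 ne]]]]].
  - by case: (neqR _ _ r1R vR).
  - by case: (neqR _ _ r1R u1R).
  - apply/negP => er; apply: ne.
    rewrite (dist_uniq d1 (dist1 (neqR _ _ r1R vR) er)).
    by rewrite (dist_uniq d2 (dist1 (neqR _ _ r1R u1R) (Hr1 _ r1R))).
have [r2 r2R res2] := HRr v u2 vw u2w vu2.
have e2 : cog_edge T r2 v.
  case: res2 => [h|[h|[du [dv [d1 d2 ne]]]]].
  - by case: (neqR _ _ r2R vR).
  - by case: (neqR _ _ r2R u2R).
  - apply/negPn/negP => er; apply: ne.
    rewrite (dist_uniq d1 (dist2 wfT covT scG (neqR _ _ r2R vR) er)).
    by rewrite (dist_uniq d2 (dist2 wfT covT scG (neqR _ _ r2R u2R) (Hr2 _ r2R))).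
exact: (key wfT (covT u1) (covT u2) (covT v) (covT r1) (covT r2)
   (Hr1 _ r1R) (Hr2 _ r1R) nev1 ev2 (Hr1 _ r2R) (Hr2 _ r2R) ne1 e2).
Qed.
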